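(* Let $q\in[0,1)$ and $\Omega_n=\{\lambda \text{ partition}:\ell(\lambda)\le n\}$, with $\ell(\lambda)$ the number of nonzero parts. Define $\eta_n(\lambda)=\ell(\lambda)-n$ and $\phi_{n,x}(\lambda)=\prod_{0\le j<-x}q^{\lambda_{n-j}}$ for $x\in\mathbb R$ (empty product $=1$, $q^0=1$, and $q^{\lambda_{-m}}=0$ for $m\ge 0$). Then, for any probability measures on the $\Omega_n$, these satisfy conditions (1)–(4): (1) $0\le\phi_{n,x}\le\phi_{n,y}\le1$ for $x\le y$; (2) for every $\varepsilon>0$ there is $M$ with $\phi_{n,x}<\varepsilon$ whenever $\eta_n-x>M$, uniformly in $n,x$; (3) for every $\varepsilon>0$ there is $M$ with $\phi_{n,x}>1-\varepsilon$ whenever $\eta_n-x<-M$, uniformly in $n,x$; (4) there is $c>0$ independent of $n$ with $\phi_{n,x+1}-\phi_{n,x}\ge c$ whenever $x<\eta_n\le x+1$. Consequently $\{\ell(\lambda)-n\}_{n\ge1}$ and $\{F_n(x)=\mathbb E\prod_{0\le j<-x}q^{\lambda_{n-j}}\}_{n\ge1}$ are asymptotically equivalent as $n\to\infty$.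
   Context: A sequence $\{\eta_n\}_{n\ge1}$ of real random variables spreads if $\lim_{n\to\infty}\sup_{x\in\mathbb R}\mathrm{Prob}\{x<\eta_n\le x+1\}=0$. A sequence $\{F_n\}_{n\ge1}$ of non-decreasing functions $\mathbb R\to\mathbb R$ spreads if $\lim_{n\to\infty}\sup_{x\in\mathbb R}(F_n(x+1)-F_n(x))=0$. A sequence of real random variables $\{\eta_n\}$ and a sequence of non-decreasing functions $\{F_n\}$ are asymptotically equivalent if (i) $\{\eta_n\}$ spreads if and only if $\{F_n\}$ spreads, and (ii) when both spread, $\lim_{n\to\infty}\sup_{x\in\mathbb R}(\mathrm{Prob}\{\eta_n\le x\}-F_n(x))=0$. *)

(* Defs.v *)
From Stdlib Require Import Reals Lra Lia List ClassicalEpsilon.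
Import ListNotations.
Open Scope R_scope.

(** Partitions: lambda = [lambda_1; ...; lambda_l] as a list of its nonzero
    parts, weakly decreasing.  lambda_i (1-indexed) = nth (i-1) lambda 0,
    which is 0 for i > l(lambda). *)
Definition is_partition (l : list nat) : Prop :=
  (forall i, (i + 1 < length l)%nat -> (nth (i + 1) l 0 <= nth i l 0)%nat) /\
  (forall i, (i < length l)%nat -> (0 < nth i l 0)%nat).

Definition ell (l : list nat) : nat := length l.

Definition in_Omega (n : nat) (l : list nat) : Prop :=
  is_partition l /\ (ell l <= n)%nat.

Definition eta (n : nat) (l : list nat) : R := INR (ell l) - INR n.

Fixpoint prodR (K : nat) (f : nat -> R) : R :=
  match K with
  | O => 1
  | S k => prodR k f * f k
  end.

(** number of integers j with 0 <= j < -x, i.e. max(0, ceil(-x)) = max(0, 1 - up x)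
    (up x is the unique integer with x < up x <= x + 1). *)
Definition nfactors (x : R) : nat := Z.to_nat (1 - up x)%Z.

(** the factor q^{lambda_{n-j}}, with the convention q^{lambda_{-m}} = 0 for m >= 0,
    i.e. the factor is 0 when the index n - j is <= 0. *)
Definition factor (q : R) (n : nat) (l : list nat) (j : nat) : R :=
  if Nat.ltb j n then q ^ (nth (n - j - 1) l 0%nat) else 0.

Definition phi (q : R) (n : nat) (x : R) (l : list nat) : R :=
  prodR (nfactors x) (factor q n l).

Definition series_value (u : nat -> R) : R :=
  epsilon (inhabits 0) (fun s => infinite_sum u s).

Definition ind (P : Prop) : R :=
  if excluded_middle_informative P then 1 else 0.

(** A probability measure on a countable set of partitions is given by atoms
    a : nat -> list nat and weights w : nat -> R (w >= 0, sum w = 1). *)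
Definition discrete_prob_on (n : nat) (a : nat -> list nat) (w : nat -> R) : Prop :=
  (forall k, 0 <= w k) /\ infinite_sum w 1 /\ (forall k, in_Omega n (a k)).

Definition Prob (a : nat -> list nat) (w : nat -> R) (A : list nat -> Prop) : R :=
  series_value (fun k => w k * ind (A (a k))).

Definition Expect (a : nat -> list nat) (w : nat -> R) (f : list nat -> R) : R :=
  series_value (fun k => w k * f (a k)).

(** lim_{n -> oo} sup_{x in R} f n x = 0  (the sup being a real number). *)
Definition sup_tends_to_0 (f : nat -> R -> R) : Prop :=
  forall eps, 0 < eps -> exists N : nat, forall n, (N <= n)%nat ->
    (forall x, f n x <= eps) /\ (exists x, - eps <= f n x).

Definition spreads_rv (a : nat -> nat -> list nat) (w : nat -> nat -> R)
  (X : nat -> list nat -> R) : Prop :=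
  sup_tends_to_0 (fun n x => Prob (a n) (w n) (fun l => x < X n l <= x + 1)).

Definition spreads_fun (F : nat -> R -> R) : Prop :=
  sup_tends_to_0 (fun n x => F n (x + 1) - F n x).

Definition asymp_equiv (a : nat -> nat -> list nat) (w : nat -> nat -> R)
  (X : nat -> list nat -> R) (F : nat -> R -> R) : Prop :=
  (spreads_rv a w X <-> spreads_fun F) /\
  (spreads_rv a w X -> spreads_fun F ->
   sup_tends_to_0 (fun n x => Prob (a n) (w n) (fun l => X n l <= x) - F n x)).

(* Main.v *)
Require Import Defs.
From Stdlib Require Import Reals Lra Lia List ClassicalEpsilon FunctionalExtensionality.
Open Scope R_scope.
Local Notation ind := Defs.ind.

Lemma is_un (s : nat -> R) l : infinite_sum s l <-> Un_cv (sum_f_R0 s) l.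
Proof. split; intro H; exact H. Qed.

Lemma sv_eq u s : infinite_sum u s -> series_value u = s.
Proof.
  intro H. unfold series_value.
  apply (uniqueness_sum u); [|exact H].
  apply (epsilon_spec (inhabits 0) (fun s => infinite_sum u s)). exists s; exact H.
Qed.

Lemma CV_ext (u v : nat -> R) l : (forall n, u n = v n) -> Un_cv v l -> Un_cv u l.
Proof. intros E H e he. destruct (H e he) as [N HN]. exists N. intros n Hn. rewrite E. auto. Qed.

Lemma CV_const (c : R) : Un_cv (fun _ => c) c.
Proof. intros e he. exists 0%nat. intros. unfold Rdist. replace (c - c) with 0 by ring. rewrite Rabs_R0. lra. Qed.

Section E.
Variables (a : nat -> list nat) (w : nat -> R).
Hypothesis hw : forall k, 0 <= w k.
Hypothesis h1 : infinite_sum w 1.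

Lemma E_conv (h : list nat -> R) C : (forall k, 0 <= h (a k) <= C) ->
  infinite_sum (fun k => w k * h (a k)) (Expect a w h).
Proof.
  intro Hb.
  assert (HB : Un_cv (sum_f_R0 (fun k => w k * C)) (1 * C)).
  { apply is_un in h1.
    intros e he. destruct (Req_dec C 0) as [C0|C0].
    - exists 0%nat. intros n _. subst C.
      rewrite (sum_eq _ (fun _ => 0)) by (intros; ring).
      rewrite sum_cte. unfold Rdist. 
      replace (0 * INR (S n) - 1 * 0) with 0 by ring. rewrite Rabs_R0; lra.
    - destruct (h1 (e / Rabs C)) as [N HN].
      { apply Rdiv_lt_0_compat; [lra| apply Rabs_pos_lt; exact C0]. }
      exists N. intros n Hn. specialize (HN n Hn).
      rewrite <- scal_sum. unfold Rdist in *.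
      replace (C * sum_f_R0 w n - 1 * C) with (C * (sum_f_R0 w n - 1)) by ring.
      rewrite Rabs_mult.
      apply Rabs_pos_lt in C0.
      apply (Rmult_lt_compat_l (Rabs C)) in HN; [|lra].
      replace (Rabs C * (e / Rabs C)) with e in HN by (field; lra). exact HN. }
  destruct (Rseries_CV_comp (fun k => w k * h (a k)) (fun k => w k * C)) as [l Hl].
  - intro k. specialize (Hb k). specialize (hw k). split.
    + apply Rmult_le_pos; lra.
    + apply Rmult_le_compat_l; lra.
  - exists (1 * C). exact HB.
  - unfold Expect. rewrite (sv_eq _ l Hl). exact Hl.
Qed.

Lemma E_le h g C D : (forall k, 0 <= h (a k) <= C) -> (forall k, 0 <= g (a k) <= D) ->
  (forall k, h (a k) <= g (a k)) -> Expect a w h <= Expect a w g.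
Proof.
  intros Hh Hg Hle.
  eapply Rle_cv_lim.
  2: apply is_un; apply (E_conv h C Hh).
  2: apply is_un; apply (E_conv g D Hg).
  intro n. apply sum_Rle. intros i _. apply Rmult_le_compat_l; auto.
Qed.

Lemma E_add h g C D : (forall k, 0 <= h (a k) <= C) -> (forall k, 0 <= g (a k) <= D) ->
  Expect a w (fun l => h l + g l) = Expect a w h + Expect a w g.
Proof.
  intros Hh Hg. unfold Expect at 1. apply sv_eq. apply is_un.
  eapply CV_ext.
  2: apply CV_plus; apply is_un; [apply (E_conv h C Hh) | apply (E_conv g D Hg)].
  intro n. simpl. rewrite <- sum_plus. apply sum_eq. intros; ring.
Qed.

Lemma E_scal h c C : 0 <= c -> (forall k, 0 <= h (a k) <= C) ->
  Expect a w (fun l => c * h l) = c * Expect a w h.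
Proof.
  intros Hc Hh. unfold Expect at 1. apply sv_eq. apply is_un.
  eapply CV_ext.
  2: apply (CV_mult (fun _ => c)); [apply CV_const | apply is_un; apply (E_conv h C Hh)].
  intro n. simpl. rewrite scal_sum. apply sum_eq. intros; ring.
Qed.

Lemma E_const h c : (forall k, h (a k) = c) -> Expect a w h = c.
Proof.
  intros Hh. unfold Expect. apply sv_eq. apply is_un.
  assert (H := CV_mult _ (fun _ => c) _ _ (proj1 (is_un w 1) h1) (CV_const c)).
  rewrite Rmult_1_l in H.
  eapply CV_ext; [|exact H].
  intro n. simpl. rewrite Rmult_comm, scal_sum. apply sum_eq. intros; rewrite Hh; ring.
Qed.
End E.

Section Phi.
Variables (q : R) (hq0 : 0 <= q) (hq1 : q < 1).

Lemma pow_01 k : 0 <= q ^ k <= 1.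
Proof. induction k; simpl. lra. split. apply Rmult_le_pos; lra.
  replace 1 with (1*1) by ring. apply Rmult_le_compat; lra. Qed.

Lemma pow_le_q k : (1 <= k)%nat -> q ^ k <= q.
Proof. intro H. destruct k; [lia|]. simpl. pose proof (pow_01 k).
  apply Rle_trans with (q*1); [apply Rmult_le_compat_l; lra | lra]. Qed.

Lemma pow_anti a b : (a <= b)%nat -> q ^ b <= q ^ a.
Proof. intro H. replace b with (a + (b - a))%nat by lia. rewrite pow_add.
  pose proof (pow_01 a); pose proof (pow_01 (b - a)).
  apply Rle_trans with (q ^ a*1); [apply Rmult_le_compat_l; lra | lra]. Qed.

Lemma factor_01 n l j : 0 <= factor q n l j <= 1.
Proof. unfold factor. destruct (Nat.ltb j n). apply pow_01. lra. Qed.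

Lemma factor_one n l j : in_Omega n l -> (j < n - ell l)%nat -> factor q n l j = 1.
Proof. intros [_ Hl] Hj. unfold factor, ell in *.
  destruct (Nat.ltb_spec j n); [|lia].
  rewrite nth_overflow by lia. reflexivity. Qed.

Lemma factor_le_q n l j : in_Omega n l -> (n - ell l <= j)%nat -> factor q n l j <= q.
Proof. intros [[_ Hp] Hl] Hj. unfold factor, ell in *.
  destruct (Nat.ltb_spec j n); [|lra].
  apply pow_le_q. specialize (Hp (n - j - 1)%nat). lia. Qed.

Lemma prod_01 K f : (forall j, 0 <= f j <= 1) -> 0 <= prodR K f <= 1.
Proof. intro Hf. induction K; simpl. lra. specialize (Hf K).
  split. apply Rmult_le_pos; lra. replace 1 with (1*1) by ring. apply Rmult_le_compat; lra. Qed.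

Lemma prod_anti K1 K2 f : (forall j, 0 <= f j <= 1) -> (K1 <= K2)%nat -> prodR K2 f <= prodR K1 f.
Proof. intros Hf H. induction H. lra. simpl. pose proof (prod_01 m f Hf). specialize (Hf m).
  apply Rle_trans with (prodR m f); auto. apply Rle_trans with (prodR m f*1); [apply Rmult_le_compat_l; lra | lra]. Qed.

Lemma prod_one n l K : in_Omega n l -> (K <= n - ell l)%nat -> prodR K (factor q n l) = 1.
Proof. intros Hl HK. induction K; simpl. reflexivity. rewrite IHK by lia.
  rewrite factor_one by (auto; lia). ring. Qed.

Lemma prod_le_pow n l K : in_Omega n l -> prodR K (factor q n l) <= q ^ (K - (n - ell l)).
Proof. intros Hl. induction K; cbn [prodR]. simpl; lra.
  destruct (Nat.le_gt_cases (n - ell l) K).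
  - replace (S K - (n - ell l))%nat with (S (K - (n - ell l))) by lia. cbn [pow].
    pose proof (factor_01 n l K). pose proof (factor_le_q n l K Hl H).
    pose proof (prod_01 K (factor q n l) (factor_01 n l)).
    rewrite Rmult_comm. apply Rmult_le_compat; lra.
  - rewrite factor_one by (auto; lia). rewrite prod_one by (auto; lia).
    replace (S K - (n - ell l))%nat with 0%nat by lia. simpl. lra.
Qed.

Lemma up_succ x : up (x + 1) = (up x + 1)%Z.
Proof. symmetry. apply tech_up; rewrite plus_IZR; destruct (archimed x); simpl; lra. Qed.

Lemma up_mono x y : x <= y -> (up x <= up y)%Z.
Proof. intro H. destruct (archimed x); destruct (archimed y).
  destruct (Z.le_gt_cases (up x) (up y)) as [E|E]; auto.
  assert (E2 : (up y + 1 <= up x)%Z) by lia. apply IZR_le in E2. rewrite plus_IZR in E2. simpl in E2. lra. Qed.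

Lemma up_int x (z : Z) : x < IZR z <= x + 1 -> up x = z.
Proof. intros [A B]. symmetry. apply tech_up; auto. Qed.

Lemma eta_IZR n l : eta n l = IZR (Z.of_nat (ell l) - Z.of_nat n).
Proof. unfold eta. rewrite minus_IZR, <- !INR_IZR_INZ. reflexivity. Qed.

Lemma phi_01 n l x : 0 <= phi q n x l <= 1.
Proof. apply prod_01, factor_01. Qed.

End Phi.

Lemma ind_01 P : 0 <= ind P <= 1.
Proof. unfold ind. destruct excluded_middle_informative; lra. Qed.
Lemma ind_T (P : Prop) : P -> ind P = 1.
Proof. unfold ind. destruct excluded_middle_informative; tauto. Qed.
Lemma ind_F (P : Prop) : ~ P -> ind P = 0.
Proof. unfold ind. destruct excluded_middle_informative; tauto. Qed.

Fixpoint sumR (K : nat) (f : nat -> R) : R :=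
  match K with O => 0 | S k => sumR k f + f k end.

Lemma sumR_nonneg K f : (forall j, 0 <= f j) -> 0 <= sumR K f.
Proof. intro H. induction K; simpl. lra. specialize (H K). lra. Qed.
Lemma sumR_term K f d : (forall j, 0 <= f j) -> (d < K)%nat -> f d <= sumR K f.
Proof. intros H Hd. induction K; simpl. lia.
  destruct (Nat.eq_dec d K). subst. pose proof (sumR_nonneg K f H). lra.
  pose proof (H K). assert (f d <= sumR K f) by (apply IHK; lia). lra. Qed.
Lemma sumR_le K f : (forall j, f j <= 1) -> sumR K f <= INR K.
Proof. intro H. induction K; simpl sumR. simpl; lra. rewrite S_INR. specialize (H K). lra. Qed.

Section Phi2.
Variables (q : R) (hq0 : 0 <= q) (hq1 : q < 1).

Lemma nf_mono x y : x <= y -> (nfactors y <= nfactors x)%nat.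
Proof. intro H. pose proof (up_mono x y H). unfold nfactors. lia. Qed.

Lemma phi_mono n l x y : x <= y -> phi q n x l <= phi q n y l.
Proof. intro H. unfold phi. apply prod_anti. apply factor_01; auto. apply nf_mono; auto. Qed.

Lemma up_lt x (z : Z) : IZR z <= x -> (z < up x)%Z.
Proof. intro H. destruct (archimed x). apply lt_IZR. lra. Qed.
Lemma lt_up x (z : Z) : x < IZR z -> (up x <= z)%Z.
Proof. intro H. destruct (archimed x). destruct (Z.le_gt_cases (up x) z) as [E|E]; auto.
  assert (E2 : (z + 1 <= up x)%Z) by lia. apply IZR_le in E2. rewrite plus_IZR in E2. simpl in E2. lra. Qed.

Lemma part2 eps : 0 < eps -> exists M : R, forall n : nat, (1 <= n)%nat ->
     forall x l, in_Omega n l -> eta n l - x > M -> phi q n x l < eps.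
Proof.
  intro He. destruct (pow_lt_1_zero q) with (y := eps) as [T HT]; auto.
  rewrite Rabs_pos_eq; lra.
  exists (INR T). intros n _ x l Hl H.
  specialize (HT T (le_n T)). rewrite Rabs_pos_eq in HT by (apply pow_01; auto).
  eapply Rle_lt_trans; [apply prod_le_pow; auto|].
  apply Rle_lt_trans with (q ^ T); [apply pow_anti; auto|exact HT].
  rewrite eta_IZR, INR_IZR_INZ in H.
  destruct (archimed x).
  assert (H3 : (up x < Z.of_nat (ell l) - Z.of_nat n - Z.of_nat T + 1)%Z).
  { apply lt_IZR. rewrite plus_IZR, !minus_IZR. rewrite minus_IZR in H. simpl. lra. }
  unfold nfactors. destruct Hl as [_ Hl]. lia.
Qed.

Lemma part3 eps : 0 < eps -> exists M : R, forall n : nat, (1 <= n)%nat ->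
     forall x l, in_Omega n l -> eta n l - x < - M -> phi q n x l > 1 - eps.
Proof.
  intro He. exists 0. intros n _ x l Hl H. unfold phi. rewrite prod_one; auto. lra.
  rewrite eta_IZR in H. assert (H2 : IZR (Z.of_nat (ell l) - Z.of_nat n) <= x) by lra.
  apply up_lt in H2. unfold nfactors. destruct Hl as [_ Hl]. lia.
Qed.

Lemma part4_up n l x : x < eta n l <= x + 1 -> up x = (Z.of_nat (ell l) - Z.of_nat n)%Z.
Proof. rewrite eta_IZR. intro H. apply up_int. lra. Qed.

Lemma part4 n l x : in_Omega n l -> x < eta n l <= x + 1 ->
  phi q n (x + 1) l - phi q n x l >= 1 - q.
Proof.
  intros Hl H. pose proof (part4_up n l x H) as U.
  unfold phi, nfactors. rewrite up_succ, U.
  pose proof Hl as [_ Hle].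
  replace (Z.to_nat (1 - (Z.of_nat (ell l) - Z.of_nat n + 1))) with (n - ell l)%nat by lia.
  replace (Z.to_nat (1 - (Z.of_nat (ell l) - Z.of_nat n))) with (S (n - ell l)) by lia.
  cbn [prodR]. rewrite prod_one by auto.
  pose proof (factor_le_q q hq0 hq1 n l (n - ell l) Hl (le_n _)). lra.
Qed.

Lemma up_add x (d : nat) : up (x + INR d) = (up x + Z.of_nat d)%Z.
Proof. apply up_int. rewrite plus_IZR, <- INR_IZR_INZ. destruct (archimed x). lra. Qed.

Lemma Dbound n l x T : in_Omega n l ->
  phi q n (x + 1) l - phi q n x l <=
  sumR T (fun d => ind (x + INR d < eta n l <= x + INR d + 1)) + q ^ T.
Proof.
  intros Hl.
  assert (HS : 0 <= sumR T (fun d => ind (x + INR d < eta n l <= x + INR d + 1)))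
    by (apply sumR_nonneg; intro; apply ind_01).
  pose proof (pow_01 q hq0 hq1 T).
  unfold phi, nfactors. rewrite up_succ.
  destruct (Z.le_gt_cases 1 (up x)).
  - replace (Z.to_nat (1 - (up x + 1))) with 0%nat by lia.
    replace (Z.to_nat (1 - up x)) with 0%nat by lia. simpl. lra.
  - set (K := Z.to_nat (1 - (up x + 1))).
    replace (Z.to_nat (1 - up x)) with (S K) by (unfold K; lia).
    cbn [prodR].
    pose proof (prod_01 K _ (factor_01 q hq0 hq1 n l)).
    pose proof (factor_01 q hq0 hq1 n l K).
    destruct (Nat.lt_ge_cases K (n - ell l)).
    + rewrite factor_one by auto. lra.
    + assert (HD : prodR K (factor q n l) - prodR K (factor q n l) * factor q n l K
                 <= prodR K (factor q n l)).
      { assert (0 <= prodR K (factor q n l) * factor q n l K) by (apply Rmult_le_pos; lra). lra. }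
      destruct (Nat.lt_ge_cases (K - (n - ell l)) T).
      * set (d0 := (K - (n - ell l))%nat).
        assert (Hi : ind (x + INR d0 < eta n l <= x + INR d0 + 1) = 1).
        { apply ind_T. rewrite eta_IZR.
          assert (E : (Z.of_nat (ell l) - Z.of_nat n)%Z = up (x + INR d0)).
          { rewrite up_add. destruct Hl as [_ Hle]. unfold d0, K. lia. }
          rewrite E. destruct (archimed (x + INR d0)). lra. }
        pose proof (sumR_term T (fun d => ind (x + INR d < eta n l <= x + INR d + 1)) d0
                      (fun j => proj1 (ind_01 _)) H4) as H5. simpl in H5. lra.
      * pose proof (prod_le_pow q hq0 hq1 n l K Hl).
        pose proof (pow_anti q hq0 hq1 T (K - (n - ell l)) H4). lra.
Qed.

Lemma ind_le_phi n l x : in_Omega n l -> ind (eta n l <= x) <= phi q n x l.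
Proof.
  intro Hl. destruct (classic (eta n l <= x)) as [H|H].
  - rewrite ind_T by auto. unfold phi. rewrite prod_one; auto. lra.
    rewrite eta_IZR in H. apply up_lt in H. unfold nfactors. destruct Hl as [_ Hle]. lia.
  - rewrite ind_F by auto. apply phi_01; auto.
Qed.

Lemma phi_far n l : in_Omega n l -> phi q n (- INR n - 1) l = 0.
Proof.
  intro Hl. pose proof (phi_01 q hq0 hq1 n l (- INR n - 1)).
  assert (phi q n (- INR n - 1) l <= 0).
  { unfold phi. eapply Rle_trans. apply (prod_anti (S n)). apply factor_01; auto.
    unfold nfactors. destruct (archimed (- INR n - 1)).
    assert (up (- INR n - 1) <= - Z.of_nat n)%Z.
    { apply lt_up. rewrite opp_IZR, <- INR_IZR_INZ. lra. }
    lia.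
    cbn [prodR]. unfold factor. rewrite Nat.ltb_irrefl. lra. }
  lra.
Qed.

Lemma eta_far n l : in_Omega n l -> ~ (eta n l <= - INR n - 1).
Proof. intro Hl. unfold eta. pose proof (pos_INR (ell l)). lra. Qed.

End Phi2.

Lemma E_ext a w h g : (forall k, h (a k) = g (a k)) -> Expect a w h = Expect a w g.
Proof. intro H. unfold Expect. f_equal. apply functional_extensionality. intro k. rewrite H. reflexivity. Qed.

Lemma E_nonneg a w (hw : forall k, 0 <= w k) (h1 : infinite_sum w 1) h C :
  (forall k, 0 <= h (a k) <= C) -> 0 <= Expect a w h.
Proof. intro Hh. replace 0 with (Expect a w (fun _ => 0)).
  apply (E_le a w hw h1 _ _ 0 C); auto. intro; lra. intro; apply Hh.
  apply (E_const a w h1). reflexivity. Qed.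

Theorem proposition5p8 (q : R) (hq0 : 0 <= q) (hq1 : q < 1)
  (a : nat -> nat -> list nat) (w : nat -> nat -> R)
  (hP : forall n : nat, (1 <= n)%nat -> discrete_prob_on n (a n) (w n)) :
  (* (1) *)
  (forall n : nat, (1 <= n)%nat -> forall l, in_Omega n l -> forall x y : R, x <= y ->
     0 <= phi q n x l /\ phi q n x l <= phi q n y l /\ phi q n y l <= 1) /\
  (* (2) *)
  (forall eps, 0 < eps -> exists M : R, forall n : nat, (1 <= n)%nat ->
     forall x l, in_Omega n l -> eta n l - x > M -> phi q n x l < eps) /\
  (* (3) *)
  (forall eps, 0 < eps -> exists M : R, forall n : nat, (1 <= n)%nat ->
     forall x l, in_Omega n l -> eta n l - x < - M -> phi q n x l > 1 - eps) /\
  (* (4) *)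
  (exists c : R, 0 < c /\ forall n : nat, (1 <= n)%nat ->
     forall x l, in_Omega n l -> x < eta n l <= x + 1 ->
       phi q n (x + 1) l - phi q n x l >= c) /\
  (* consequence *)
  asymp_equiv a w eta (fun n x => Expect (a n) (w n) (phi q n x)).
Proof.
  split; [|split; [|split; [|split]]].
  - intros n _ l Hl x y Hxy. pose proof (phi_01 q hq0 hq1 n l x). pose proof (phi_01 q hq0 hq1 n l y).
    pose proof (phi_mono q hq0 hq1 n l x y Hxy). lra.
  - apply part2; auto.
  - apply part3; auto.
  - exists (1 - q). split. lra. intros. apply part4; auto.
  -
    assert (HD : forall n, (1 <= n)%nat -> forall x,
      Expect (a n) (w n) (phi q n (x + 1)) - Expect (a n) (w n) (phi q n x) =
      Expect (a n) (w n) (fun l => phi q n (x + 1) l - phi q n x l)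
      /\ forall k, 0 <= phi q n (x + 1) (a n k) - phi q n x (a n k) <= 1).
    { intros n Hn x. destruct (hP n Hn) as [hw [h1 hO]].
      assert (Hb : forall k, 0 <= phi q n (x + 1) (a n k) - phi q n x (a n k) <= 1).
      { intro k. pose proof (phi_01 q hq0 hq1 n (a n k) x). pose proof (phi_01 q hq0 hq1 n (a n k) (x+1)).
        pose proof (phi_mono q hq0 hq1 n (a n k) x (x+1) ltac:(lra)). lra. }
      split; auto.
      rewrite (E_ext (a n) (w n) (phi q n (x + 1)) (fun l => phi q n x l + (phi q n (x + 1) l - phi q n x l)))
        by (intro; ring).
      rewrite (E_add (a n) (w n) hw h1 _ _ 1 1); [ring| |exact Hb].
      intro k. apply phi_01; auto. }
    split; [split|].
    + intros Hs eps He.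
      destruct (pow_lt_1_zero q) with (y := eps / 2) as [T HT]. rewrite Rabs_pos_eq; lra. lra.
      specialize (HT T (le_n T)). rewrite Rabs_pos_eq in HT by (apply pow_01; auto).
      pose proof (pos_INR T).
      destruct (Hs (eps / (2 * (INR T + 1)))) as [N HN].
      { apply Rdiv_lt_0_compat; lra. }
      exists (max N 1). intros n Hn. destruct (hP n ltac:(lia)) as [hw [h1 hO]].
      destruct (HD n ltac:(lia) 0) as [_ Hb0].
      split.
      * intro x. destruct (HD n ltac:(lia) x) as [E Hb]. simpl. rewrite E.
        set (G := fun l => sumR T (fun d => ind (x + INR d < eta n l <= x + INR d + 1)) + q ^ T).
        assert (HG : forall k, 0 <= G (a n k) <= INR T + 1).
        { intro k. unfold G. pose proof (sumR_le T (fun d => ind (x + INR d < eta n (a n k) <= x + INR d + 1))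
             (fun j => proj2 (ind_01 _))). pose proof (sumR_nonneg T (fun d => ind (x + INR d < eta n (a n k) <= x + INR d + 1))
             (fun j => proj1 (ind_01 _))). pose proof (pow_01 q hq0 hq1 T). lra. }
        eapply Rle_trans. apply (E_le (a n) (w n) hw h1 _ G 1 (INR T + 1)); auto.
        intro k. apply Dbound; auto.
        assert (ES : forall T', (T' <= T)%nat -> Expect (a n) (w n)
             (fun l => sumR T' (fun d => ind (x + INR d < eta n l <= x + INR d + 1))) <=
             INR T' * (eps / (2 * (INR T + 1)))).
        { induction T'; intro HT'.
          - rewrite (E_const (a n) (w n) h1 _ 0) by reflexivity. simpl; lra.
          - change (Expect (a n) (w n) (fun l => sumR T' (fun d => ind (x + INR d < eta n l <= x + INR d + 1))
                   + ind (x + INR T' < eta n l <= x + INR T' + 1)) <= INR (S T') * (eps / (2 * (INR T + 1)))).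
            rewrite (E_add (a n) (w n) hw h1 _ _ (INR T') 1).
            + rewrite S_INR. specialize (IHT' ltac:(lia)).
              destruct (HN n ltac:(lia)) as [HN1 _]. specialize (HN1 (x + INR T')). simpl in HN1.
              unfold Prob in HN1. change (Expect (a n) (w n) (fun l => ind (x + INR T' < eta n l <= x + INR T' + 1)) <=
                  eps / (2 * (INR T + 1))) in HN1. lra.
            + intro k. split. apply sumR_nonneg. intro; apply ind_01. apply sumR_le. intro; apply ind_01.
            + intro k. apply ind_01. }
        unfold G. rewrite (E_add (a n) (w n) hw h1 _ _ (INR T) 1).
        -- rewrite (E_const (a n) (w n) h1 (fun _ => q ^ T) (q ^ T)) by reflexivity.
           specialize (ES T (le_n T)).
           assert (INR T * (eps / (2 * (INR T + 1))) <= eps / 2).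
           { apply Rle_trans with ((INR T + 1) * (eps / (2 * (INR T + 1)))).
             apply Rmult_le_compat_r. apply Rlt_le, Rdiv_lt_0_compat; lra. lra.
             right. field. lra. }
           lra.
        -- intro k. split. apply sumR_nonneg. intro; apply ind_01. apply sumR_le. intro; apply ind_01.
        -- intro k. apply pow_01; auto.
      * exists 0. destruct (HD n ltac:(lia) 0) as [E Hb]. simpl. rewrite E.
        assert (0 <= Expect (a n) (w n) (fun l => phi q n (0 + 1) l - phi q n 0 l))
          by (apply (E_nonneg (a n) (w n) hw h1 _ 1); exact Hb).
        lra.
    + intros Hs eps He.
      destruct (Hs (eps * (1 - q))) as [N HN]. apply Rmult_lt_0_compat; lra.
      exists (max N 1). intros n Hn. destruct (hP n ltac:(lia)) as [hw [h1 hO]].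
      split.
      * intro x. destruct (HD n ltac:(lia) x) as [E Hb].
        destruct (HN n ltac:(lia)) as [HN1 _]. specialize (HN1 x). simpl in HN1. rewrite E in HN1.
        unfold Prob. change (Expect (a n) (w n) (fun l => ind (x < eta n l <= x + 1)) <= eps).
        assert (Expect (a n) (w n) (fun l => (1 - q) * ind (x < eta n l <= x + 1)) <=
                Expect (a n) (w n) (fun l => phi q n (x + 1) l - phi q n x l)).
        { apply (E_le (a n) (w n) hw h1 _ _ (1 - q) 1); auto.
          - intro k. pose proof (ind_01 (x < eta n (a n k) <= x + 1)). split.
            apply Rmult_le_pos; lra. rewrite <- (Rmult_1_r (1 - q)) at 2. apply Rmult_le_compat_l; lra.
          - intro k. destruct (classic (x < eta n (a n k) <= x + 1)).
            + rewrite ind_T by auto. pose proof (part4 q hq0 hq1 n (a n k) x (hO k) H). lra.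
            + rewrite ind_F by auto. specialize (Hb k). lra. }
        rewrite (E_scal (a n) (w n) hw h1 _ (1 - q) 1) in H by (lra || (intro; apply ind_01)).
        apply (Rmult_le_reg_l (1 - q)). lra. lra.
      * exists 0. unfold Prob. change (- eps <= Expect (a n) (w n) (fun l => ind (0 < eta n l <= 0 + 1))).
        assert (0 <= Expect (a n) (w n) (fun l => ind (0 < eta n l <= 0 + 1)))
          by (apply (E_nonneg (a n) (w n) hw h1 _ 1); intro; apply ind_01).
        lra.
    + intros _ _ eps He. exists 1%nat. intros n Hn. destruct (hP n Hn) as [hw [h1 hO]].
      split.
      * intro x. unfold Prob. change (Expect (a n) (w n) (fun l => ind (eta n l <= x)) - Expect (a n) (w n) (phi q n x) <= eps).
        assert (Expect (a n) (w n) (fun l => ind (eta n l <= x)) <= Expect (a n) (w n) (phi q n x)).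
        { apply (E_le (a n) (w n) hw h1 _ _ 1 1). intro; apply ind_01. intro; apply phi_01; auto.
          intro k. apply ind_le_phi; auto. }
        lra.
      * exists (- INR n - 1). unfold Prob.
        change (- eps <= Expect (a n) (w n) (fun l => ind (eta n l <= - INR n - 1)) - Expect (a n) (w n) (phi q n (- INR n - 1))).
        rewrite (E_const (a n) (w n) h1 (fun l => ind (eta n l <= - INR n - 1)) 0).
        rewrite (E_const (a n) (w n) h1 (phi q n (- INR n - 1)) 0). lra.
        intro k. apply phi_far; auto.
        intro k. apply ind_F, eta_far; auto.
Qed.
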